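(* Let $m$ be odd, $q=2^m$, $R=GR(4,m)$ with Teichmüller set $\mathcal{T}$, let $B\in\mathcal{T}$ with $B\ne0$, and let $d\in\mathbb{F}_q$. The number of quadruples $(X,Y,Z,W)\in\mathcal{T}^4$ satisfying $$X+Y+Z+W=2B,\qquad x^3+y^3+z^3+w^3=b^3d$$ is $3\cdot2^m$ if $d=0$, is $0$ if $d\in M_0\cup M_1$, and is $6\cdot2^m$ if $d\in M_3$.
   Context: $R=GR(4,m)=\mathbb{Z}_4[x]/(f(x))$ with $f$ monic of degree $m$ irreducible mod 2; $\mathcal{T}=\{0,1,\beta,\dots,\beta^{q-2}\}$ with $\beta\in R^*$ of order $q-1$; lower-case letters denote reductions mod 2 (in $\mathbb{F}_q$) of the corresponding elements of $\mathcal{T}$. For $c\in\mathbb{F}_q$ let $f_c(x)=x^3+x+c$, and for $i\in\{0,1,3\}$ let $M_i=\{c\in\mathbb{F}_q^*: f_c(x)=0 \text{ has exactly } i \text{ solutions in } \mathbb{F}_q\}$. *)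

(* Defs.v *)
From HB Require Import structures.
From mathcomp Require Import all_boot all_order all_algebra all_field.
Set Implicit Arguments. Unset Strict Implicit. Unset Printing Implicit Defensive.
Local Open Scope ring_scope.

(* Galois ring R = GR(4,m) = Z_4[x]/(f), with f monic of degree m.
   Elements of R are represented by their (unique) reduced representative,
   a polynomial of degree < m, stored as its coefficient row vector 'rV['Z_4]_m.
   Addition in R is coefficientwise addition of row vectors. *)
Definition GR (m : nat) := 'rV['Z_4]_m.

Definition GRmul (m : nat) (f : {poly 'Z_4}) (u v : GR m) : GR m :=
  poly_rV (Pdiv.Ring.rmodp (rVpoly u * rVpoly v) f).

Definition GRone (m : nat) (f : {poly 'Z_4}) : GR m :=
  poly_rV (Pdiv.Ring.rmodp 1 f).

Definition GRexp (m : nat) (f : {poly 'Z_4}) (u : GR m) (n : nat) : GR m :=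
  iter n (GRmul f u) (GRone m f).

Definition has_order_q1 (m : nat) (f : {poly 'Z_4}) (beta : GR m) : Prop :=
  GRexp f beta (2 ^ m).-1 = GRone m f /\
  (forall k : nat, (0 < k < (2 ^ m).-1)%N -> GRexp f beta k != GRone m f).

Definition Teich (m : nat) (f : {poly 'Z_4}) (beta : GR m) : {set GR m} :=
  0 |: [set GRexp f beta (nat_of_ord i) | i : 'I_((2 ^ m).-1)].

Definition red2 (a : 'Z_4) : 'F_2 := (nat_of_ord a)%:R.

Definition fbar (f : {poly 'Z_4}) : {poly 'F_2} := map_poly red2 f.

(* F_q = F_2[x]/(fbar), elements represented by reduced representatives *)
Definition Fq (m : nat) := 'rV['F_2]_m.

Definition Fqmul (m : nat) (f : {poly 'Z_4}) (u v : Fq m) : Fq m :=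
  poly_rV ((rVpoly u * rVpoly v) %% fbar f).

Definition Fqcube (m : nat) (f : {poly 'Z_4}) (u : Fq m) : Fq m :=
  Fqmul f u (Fqmul f u u).

Definition redR (m : nat) (X : GR m) : Fq m := map_mx red2 X.

Definition Mset (m : nat) (f : {poly 'Z_4}) (i : nat) : {set Fq m} :=
  [set c : Fq m | (c != 0) &&
     (#|[set y : Fq m | Fqcube f y + y + c == 0]| == i)].
Arguments Mset : clear implicits.

(* Main.v *)
Require Import Defs.
From HB Require Import structures.
From mathcomp Require Import all_boot all_order all_algebra all_field.
From mathcomp Require Import ring.
Import GRing.Theory.
Local Open Scope ring_scope.

Section FF.
Variable K : finFieldType.
Hypothesis h2 : (2%:R : K) = 0.
Variable n : nat.
Hypothesis hK : #|K| = (2 ^ n)%N.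
Hypothesis n0 : (0 < n)%N.

Lemma c2 (x y z : K) : x - y = 2%:R * z -> x = y.
Proof. by move/eqP; rewrite h2 mul0r subr_eq0 => /eqP. Qed.

Lemma addKK (x : K) : x + x = 0.
Proof. by rewrite -mulr2n -mulr_natl h2 mul0r. Qed.

Lemma oppK2 (x : K) : - x = x.
Proof. by apply/eqP; rewrite eq_sym -subr_eq0 opprK addKK. Qed.

Lemma eq_add0 (x y : K) : (x + y == 0) = (x == y).
Proof. by rewrite addr_eq0 oppK2. Qed.

Lemma sq_inj : injective (fun x : K => x ^+ 2).
Proof.
move=> x y /= e.
have : (x + y) ^+ 2 = 0.
  have -> : (x + y) ^+ 2 = x ^+ 2 + y ^+ 2 + 2%:R * (x * y) by ring.
  by rewrite h2 mul0r addr0 e addKK.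
by move/eqP; rewrite expf_eq0 /= eq_add0 => /eqP.
Qed.

Definition sqrtK (y : K) := y ^+ (2 ^ n.-1).

Lemma sqrtKE y : (sqrtK y) ^+ 2 = y.
Proof. by rewrite -exprM -expnSr prednK // -hK expf_card. Qed.

Lemma sqrtK_sq a : sqrtK (a ^+ 2) = a.
Proof. by apply: sq_inj; rewrite /= sqrtKE. Qed.

Lemma sqrtK0 : sqrtK 0 = 0.
Proof. by rewrite /sqrtK expr0n expn_eq0. Qed.

Lemma quad_card (c : K) : #|[set v : K | v ^+ 2 + v + c == 0]| =
  if [exists v, v ^+ 2 + v + c == 0] then 2%N else 0%N.
Proof.
case: ifP.
  move/existsP => [v0 hv0].
  have -> : [set v : K | v ^+ 2 + v + c == 0] = [set v0; v0 + 1].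
    apply/setP => v; rewrite !inE.
    have -> : v ^+ 2 + v + c = (v + v0) * (v + (v0 + 1)) + (v0 ^+ 2 + v0 + c).
      apply: (@c2 _ _ (-(v * v0) - v0^+2 - v0)); ring.
    by rewrite (eqP hv0) addr0 mulf_eq0 !eq_add0.
  rewrite cards2.
  have -> : (v0 != v0 + 1) = true; last by [].
  by rewrite -[X in X != _]addr0 (inj_eq (addrI v0)) eq_sym oner_eq0.
move/negbT/existsPn => H.
apply/eqP; rewrite cards_eq0; apply/eqP/setP => v; rewrite !inE.
by rewrite (negbTE (H v)).
Qed.

Lemma sum_pair (I J : finType) (F : I * J -> nat) :
  (\sum_x F x = \sum_i \sum_j F (i, j))%N.
Proof. by rewrite pair_bigA; apply: eq_bigr => -[i j]. Qed.

Lemma sum_uniq (F : K -> bool) c : (forall x, F x -> x = c) ->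
  (\sum_x (if F x then 1 else 0) = (if F c then 1 else 0))%N.
Proof.
move=> H; rewrite (bigD1 c) //= big1 ?addn0 // => x /negbTE ne.
by case E: (F x) => //; rewrite (H x E) eqxx in ne.
Qed.

Lemma card_reindex (h : K -> K) (P : pred K) : injective h ->
  #|[set x | P x]| = #|[set x | P (h x)]|.
Proof. by move=> hi; rewrite -!sum1dep_card (reindex_inj hi). Qed.

Definition e2 (a : K * K * K * K) :=
  a.1.1.1 * a.1.1.2 + a.1.1.1 * a.1.2 + a.1.1.1 * a.2
  + a.1.1.2 * a.1.2 + a.1.1.2 * a.2 + a.1.2 * a.2.

Definition Cond (b D : K) (a : K * K * K * K) :=
  [&& a.1.1.1 + a.1.1.2 + a.1.2 + a.2 == 0, e2 a + b == 0 &
      (a.1.1.1 ^+ 2) ^+ 3 + (a.1.1.2 ^+ 2) ^+ 3 + (a.1.2 ^+ 2) ^+ 3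
      + (a.2 ^+ 2) ^+ 3 == b ^+ 3 * D].

Definition g (t : K) : nat :=
  if t == 0 then 1%N else #|[set v : K | v ^+ 2 + v + (1 + t^-1) == 0]|.

Definition quad (b s u : K) := u ^+ 2 + u * s + s ^+ 2 + b == 0.
Definition cub (b D s : K) := (s * (s ^+ 2 + b)) ^+ 2 == b ^+ 3 * D.

Lemma Cond_sub b D a1 s u :
  Cond b D (a1, a1 + s, a1 + u, a1 + (a1 + s) + (a1 + u)) = quad b s u && cub b D s.
Proof.
rewrite /Cond /e2 /=.
have -> : a1 + (a1 + s) + (a1 + u) + (a1 + (a1 + s) + (a1 + u)) = 0.
  by apply: (@c2 _ _ (3%:R*a1 + s + u)); ring.
rewrite eqxx /=.
have -> : a1 * (a1 + s) + a1 * (a1 + u) + a1 * (a1 + (a1 + s) + (a1 + u)) +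
   (a1 + s) * (a1 + u) + (a1 + s) * (a1 + (a1 + s) + (a1 + u)) +
   (a1 + u) * (a1 + (a1 + s) + (a1 + u)) + b = u ^+ 2 + u * s + s ^+ 2 + b.
  by apply: (@c2 _ _ (6%:R*a1^+2 + 4%:R*a1*s + 4%:R*a1*u + s*u)); ring.
have -> : (a1 ^+ 2) ^+ 3 + ((a1 + s) ^+ 2) ^+ 3 + ((a1 + u) ^+ 2) ^+ 3 +
    ((a1 + (a1 + s) + (a1 + u)) ^+ 2) ^+ 3 = (s * (u ^+ 2 + u * s)) ^+ 2.
  apply: (@c2 _ _ (366%:R*a1^+6 + 732%:R*a1^+5*s + 615%:R*a1^+4*s^+2 + 280%:R*a1^+3*s^+3 + 75%:R*a1^+2*s^+4 + 12%:R*a1*s^+5 + s^+6 + 732%:R*a1^+5*u + 615%:R*a1^+4*u^+2 + 280%:R*a1^+3*u^+3 + 75%:R*a1^+2*u^+4 + 12%:R*a1*u^+5 + u^+6 + 1215%:R*a1^+4*s*u + 810%:R*a1^+3*s^+2*u + 810%:R*a1^+3*s*u^+2 + 270%:R*a1^+2*s^+3*u + 405%:R*a1^+2*s^+2*u^+2 + 270%:R*a1^+2*s*u^+3 + 45%:R*a1*s^+4*u + 90%:R*a1*s^+3*u^+2 + 90%:R*a1*s^+2*u^+3 + 45%:R*a1*s*u^+4 + 3%:R*s^+5*u + 7%:R*s^+4*u^+2 + 9%:R*s^+3*u^+3 + 7%:R*s^+2*u^+4 + 3%:R*s*u^+5)).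
  ring.
rewrite /quad /cub; case: (boolP (_ == 0)) => //= hq.
have -> : u ^+ 2 + u * s = s ^+ 2 + b; last by [].
by apply/eqP; rewrite -eq_add0 addrA.
Qed.


Definition sr (b t : K) := sqrtK (b * t).
Definition rt (D t : K) := t ^+ 3 + t + D == 0.

Lemma count_main b D : b != 0 ->
  #|[set a | Cond b D a]| = (#|K| * \sum_t (rt D t * g t))%N.
Proof.
move=> b0.
rewrite -sum1dep_card big_mkcond /= sum_pair sum_pair sum_pair.
transitivity (\sum_(a1 : K) \sum_(s : K) \sum_(u : K)
   (if quad b s u && cub b D s then 1 else 0))%N.
  apply: eq_bigr => a1 _; rewrite (reindex_inj (addrI a1)); apply: eq_bigr => s _.
  rewrite (reindex_inj (addrI a1)); apply: eq_bigr => u _.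
  rewrite (@sum_uniq _ (a1 + (a1 + s) + (a1 + u))) ?Cond_sub //.
  by move=> x /andP [hs _]; move: hs; rewrite /= eq_add0 => /eqP <-.
rewrite sum_nat_const; congr (_ * _)%N.
have sr_inj : injective (sr b).
  move=> t1 t2 e; have := congr1 (fun x => x ^+ 2) e.
  by rewrite /= /sr !sqrtKE => /(mulfI b0).
rewrite (reindex_inj sr_inj); apply: eq_bigr => t _.
have hs2 : (sr b t) ^+ 2 = b * t by rewrite /sr sqrtKE.
have -> : \sum_u (if quad b (sr b t) u && cub b D (sr b t) then 1 else 0)%N
   = (cub b D (sr b t) * #|[set u | quad b (sr b t) u]|)%N.
  case: (cub b D (sr b t)); rewrite ?andbT ?andbF ?mul1n ?mul0n.
    rewrite -big_mkcond /= -sum1dep_card; apply: eq_bigl => u.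
    by rewrite andbT.
  by rewrite big1 // => u _; rewrite andbF.
congr (_ * _)%N.
  rewrite /cub /rt exprMn hs2.
  have -> : b * t * (b * t + b) ^+ 2 = b ^+ 3 * (t * (t + 1) ^+ 2) by ring.
  rewrite (inj_eq (mulfI _)) ?expf_neq0 //.
  have -> : t * (t + 1) ^+ 2 = t ^+ 3 + t.
    by apply: (@c2 _ _ (t ^+ 2)); ring.
  by rewrite eq_add0.
rewrite /g; case: (boolP (t == 0)) => [/eqP -> | t0].
  have -> : sr b 0 = 0 by rewrite /sr mulr0 sqrtK0.
  have -> : [set u | quad b 0 u] = [set sqrtK b].
    apply/setP => u; rewrite !inE /quad mulr0 expr0n addr0 /= addr0 eq_add0.
    by rewrite -{1}(sqrtKE b) (inj_eq sq_inj).
  by rewrite cards1.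
have s0 : sr b t != 0.
  by apply: contraNneq (mulf_neq0 b0 t0) => e; rewrite -hs2 e expr0n.
rewrite (@card_reindex (fun v => sr b t * v)); last exact: mulfI.
apply: eq_card => v; rewrite !inE /quad.
have -> : (sr b t * v) ^+ 2 + sr b t * v * sr b t + sr b t ^+ 2 + b
   = sr b t ^+ 2 * (v ^+ 2 + v + 1) + b by ring.
rewrite hs2.
have -> : b * t * (v ^+ 2 + v + 1) + b = b * t * (v ^+ 2 + v + (1 + t^-1)).
  by field.
by rewrite mulf_eq0 (negbTE (mulf_neq0 b0 t0)).
Qed.

Definition Rt (D : K) := [set t : K | rt D t].

Lemma sum_Rt D : (\sum_t (rt D t * g t) = \sum_(t in Rt D) g t)%N.
Proof.
rewrite [RHS]big_mkcond; apply: eq_bigr => t _; rewrite inE.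
by case: (rt D t); rewrite ?mul1n ?mul0n.
Qed.

Lemma sum_d0 : (\sum_(t in Rt 0%R) g t = 3)%N.
Proof.
have -> : Rt 0 = [set 0; 1].
  apply/setP => t; rewrite !inE /rt addr0.
  have -> : t ^+ 3 + t = t * (t + 1) ^+ 2 by apply: (@c2 _ _ (- t ^+ 2)); ring.
  by rewrite mulf_eq0 expf_eq0 /= eq_add0.
rewrite big_setU1 ?big_set1 /=; last by rewrite inE eq_sym oner_eq0.
rewrite /g eqxx oner_eq0 invr1 addKK quad_card.
have -> : [exists v : K, v ^+ 2 + v + 0 == 0] = true; last by [].
by apply/existsP; exists 0; rewrite expr2 mul0r !addr0.
Qed.

Lemma other_root D t : D != 0 -> rt D t ->
  [exists v, v ^+ 2 + v + (1 + t^-1) == 0] = [exists t', rt D t' && (t' != t)].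
Proof.
move=> D0 ht.
have t0 : t != 0.
  by apply: contraTneq ht => ->; rewrite /rt expr0n !add0r.
have key : forall t', t' ^+ 3 + t' + D
   = (t ^+ 3 + t + D) + (t' - t) * (t' ^+ 2 + t * t' + t ^+ 2 + 1).
  by move=> t'; ring.
apply/existsP/existsP.
  move=> [v hv]; exists (t * v ^+ 2).
  have E : (t * v ^+ 2) ^+ 2 + t * (t * v ^+ 2) + t ^+ 2 + 1
      = t ^+ 2 * (v ^+ 2 + v + (1 + t^-1)) ^+ 2.
    apply: (@c2 _ _ (- (t ^+ 2 * (v^+3 + v^+2*t^-1 + v^+2 + v*t^-1 + v + t^-1)))).
    by field.
  apply/andP; split.
    by rewrite /rt key E (eqP hv) [0 ^+ 2]expr2 mul0r !mulr0 addr0.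
  apply/negP => /eqP e.
  have v1 : v ^+ 2 = 1 ^+ 2.
    by apply: (mulfI t0); rewrite e expr1n mulr1.
  move: hv; rewrite (sq_inj _ _ v1) expr1n addKK add0r eq_add0 eq_sym invr_eq1 => /eqP t1.
  by move: ht; rewrite /rt t1 expr1n addKK add0r (negbTE D0).
move=> [t' /andP [ht' ne]].
have hq : t' ^+ 2 + t * t' + t ^+ 2 + 1 = 0.
  move: ht'; rewrite /rt key (eqP ht) add0r mulf_eq0 subr_eq0 (negbTE ne) /=.
  by move/eqP.
exists (sqrtK (t' / t)).
set v := sqrtK (t' / t).
have : (v ^+ 2 + v + (1 + t^-1)) ^+ 2 = 0.
  have -> : (v ^+ 2 + v + (1 + t^-1)) ^+ 2 = (v ^+ 2) ^+ 2 + v ^+ 2 + 1 + t^-1 ^+ 2.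
    by apply: (@c2 _ _ (v^+3 + v^+2*t^-1 + v^+2 + v*t^-1 + v + t^-1)); ring.
  rewrite /v sqrtKE.
  have -> : (t' / t) ^+ 2 + t' / t + 1 + t^-1 ^+ 2
      = t^-1 ^+ 2 * (t' ^+ 2 + t * t' + t ^+ 2 + 1) by field.
  by rewrite hq mulr0.
by move/eqP; rewrite expf_eq0.
Qed.

Lemma sum_d1 D : D != 0 -> (#|Rt D| <= 1)%N -> (\sum_(t in Rt D) g t = 0)%N.
Proof.
move=> D0 c1; apply: big1 => t; rewrite inE => ht.
have t0 : t != 0.
  by apply: contraTneq ht => ->; rewrite /rt expr0n !add0r.
rewrite /g (negbTE t0) quad_card (@other_root D t D0 ht).
case: existsP => // -[t' /andP [ht' ne]].
have : (#|[set t; t']| <= #|Rt D|)%N.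
  by apply: subset_leq_card; apply/subsetP => x; rewrite !inE => /orP [] /eqP ->.
by rewrite cards2 eq_sym ne => /leq_trans /(_ c1).
Qed.

Lemma sum_d3 D : D != 0 -> #|Rt D| = 3%N -> (\sum_(t in Rt D) g t = 6)%N.
Proof.
move=> D0 c3.
rewrite (eq_bigr (fun _ => 2%N)) ?sum_nat_const ?c3 // => t ht.
have t0 : t != 0.
  by apply: contraTneq ht => ->; rewrite inE /rt expr0n !add0r.
have ht2 : rt D t by rewrite inE in ht.
rewrite /g (negbTE t0) quad_card (@other_root D t D0 ht2).
have : (0 < #|Rt D :\ t|)%N.
  by move: (cardsD1 t (Rt D)); rewrite ht c3 add1n => -[<-].
case/card_gt0P => t' ; rewrite !inE => /andP [ne ht'].
by have -> : [exists t', rt D t' && (t' != t)] = true by apply/existsP; exists t'; rewrite ht'.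
Qed.


Variables (G : finType) (S : comNzRingType) (r : {rmorphism S -> K}).
Hypothesis h4 : (4%:R : S) = 0.
Hypothesis hker : forall u : S, r u = 0 -> exists k, u = 2%:R * k.
Hypothesis hker2 : forall u : S, 2%:R * u = 0 -> r u = 0.
Variable phi : G -> S.
Hypothesis phi_inj : injective phi.
Variable TG : {set G}.
Hypothesis hTsq : forall X, X \in TG -> exists u, phi X = u ^+ 2.
Hypothesis hTcard : #|TG| = #|K|.

Definition rho X := r (phi X).
Definition hh X := sqrtK (rho X).

Lemma sq_resp (u v : S) : r u = r v -> u ^+ 2 = v ^+ 2.
Proof.
move=> e; have : r (u - v) = 0 by rewrite rmorphB e subrr.
move/hker => [k hk].
have -> : u = v + 2%:R * k by rewrite -hk addrC subrK.
have -> : (v + 2%:R * k) ^+ 2 = v ^+ 2 + 4%:R * (v * k + k ^+ 2) by ring.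
by rewrite h4 mul0r addr0.
Qed.

Lemma hh_sq X u : phi X = u ^+ 2 -> hh X = r u.
Proof. by move=> e; rewrite /hh /rho e rmorphXn sqrtK_sq. Qed.

Lemma hhE X : (hh X) ^+ 2 = rho X.
Proof. exact: sqrtKE. Qed.

Lemma hh_inj : {in TG &, injective hh}.
Proof.
move=> X Y hX hY e.
have [u hu] := hTsq _ hX; have [v hv] := hTsq _ hY.
apply: phi_inj; rewrite hu hv; apply: sq_resp.
by rewrite -(hh_sq _ _ hu) -(hh_sq _ _ hv).
Qed.

Lemma rho_inj : {in TG &, injective rho}.
Proof. by move=> X Y hX hY e; apply: hh_inj => //; rewrite /hh e. Qed.

Lemma hh_surj a : exists2 X, X \in TG & hh X = a.
Proof.
have : hh @: TG = [set: K].
  apply/eqP; rewrite eqEcard subsetT cardsT card_in_imset ?hTcard //.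
  by rewrite leqnn.
  exact: hh_inj.
move/setP/(_ a); rewrite inE => /imsetP [X hX ->].
by exists X.
Qed.

Lemma key_equiv (u1 u2 u3 u4 u0 : S) :
  (u1 ^+ 2 + u2 ^+ 2 + u3 ^+ 2 + u4 ^+ 2 == 2%:R * u0 ^+ 2) =
  (r (u1 + u2 + u3 + u4) == 0) &&
  (r (u1 * u2 + u1 * u3 + u1 * u4 + u2 * u3 + u2 * u4 + u3 * u4 + u0 ^+ 2) == 0).
Proof.
set s := u1 + u2 + u3 + u4.
set e := u1 * u2 + u1 * u3 + u1 * u4 + u2 * u3 + u2 * u4 + u3 * u4.
have hs : u1 ^+ 2 + u2 ^+ 2 + u3 ^+ 2 + u4 ^+ 2 = s ^+ 2 - 2%:R * e.
  by rewrite /s /e; ring.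
rewrite hs.
have r2 : r 2%:R = 0 by rewrite rmorph_nat h2.
apply/eqP/andP.
  move=> H.
  have rs : r s = 0.
    have : r (s ^+ 2) = 0.
      have -> : s ^+ 2 = 2%:R * (u0 ^+ 2 + e) by rewrite -[s ^+ 2](subrK (2%:R * e)) H; ring.
      by rewrite rmorphM r2 mul0r.
    by move/eqP; rewrite rmorphXn expf_eq0 /= => /eqP.
  have [k hk] := hker _ rs.
  have s2 : s ^+ 2 = 0.
    rewrite hk; have -> : (2%:R * k) ^+ 2 = 4%:R * k ^+ 2 by ring.
    by rewrite h4 mul0r.
  split; first by rewrite rs.
  apply/eqP; apply: hker2.
  have -> : 2%:R * (e + u0 ^+ 2) = s ^+ 2 - (s ^+ 2 - 2%:R * e - 2%:R * u0 ^+ 2) by ring.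
  by rewrite H s2 subrr subr0.
move=> [/eqP rs /eqP re].
have [k hk] := hker _ rs.
have s2 : s ^+ 2 = 0.
  rewrite hk; have -> : (2%:R * k) ^+ 2 = 4%:R * k ^+ 2 by ring.
  by rewrite h4 mul0r.
have [k' hk'] := hker _ re.
have e2 : 2%:R * (e + u0 ^+ 2) = 0.
  rewrite hk'; have -> : 2%:R * (2%:R * k') = 4%:R * k' by ring.
  by rewrite h4 mul0r.
rewrite s2.
have -> : 0 - 2%:R * e = 2%:R * u0 ^+ 2 - 2%:R * (e + u0 ^+ 2) by ring.
by rewrite e2 subr0.
Qed.


Definition Acond (B : G) (D : K) (Q : G * G * G * G) :=
  [&& Q.1.1.1 \in TG, Q.1.1.2 \in TG, Q.1.2 \in TG, Q.2 \in TG,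
   phi Q.1.1.1 + phi Q.1.1.2 + phi Q.1.2 + phi Q.2 == 2%:R * phi B &
   rho Q.1.1.1 ^+ 3 + rho Q.1.1.2 ^+ 3 + rho Q.1.2 ^+ 3 + rho Q.2 ^+ 3
     == rho B ^+ 3 * D].

Lemma condE B D X1 X2 X3 X4 : B \in TG -> X1 \in TG -> X2 \in TG ->
  X3 \in TG -> X4 \in TG ->
  [&& phi X1 + phi X2 + phi X3 + phi X4 == 2%:R * phi B &
   rho X1 ^+ 3 + rho X2 ^+ 3 + rho X3 ^+ 3 + rho X4 ^+ 3 == rho B ^+ 3 * D]
  = Cond (rho B) D (hh X1, hh X2, hh X3, hh X4).
Proof.
move=> hB h1 h2' h3 h4'.
have [u0 hu0] := hTsq _ hB; have [u1 hu1] := hTsq _ h1.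
have [u2 hu2] := hTsq _ h2'; have [u3 hu3] := hTsq _ h3.
have [u4 hu4] := hTsq _ h4'.
rewrite -[rho X1]hhE -[rho X2]hhE -[rho X3]hhE -[rho X4]hhE.
rewrite {1}hu1 {1}hu2 {1}hu3 {1}hu4 {1}hu0 key_equiv !rmorphD -hu0 !rmorphM.
rewrite -(hh_sq _ _ hu1) -(hh_sq _ _ hu2) -(hh_sq _ _ hu3) -(hh_sq _ _ hu4).
by rewrite /Cond /e2 /= -andbA.
Qed.

Lemma countA B D : B \in TG -> rho B != 0 ->
  #|[set Q | Acond B D Q]| = (#|K| * \sum_t (rt D t * g t))%N.
Proof.
move=> hB b0; rewrite -(@count_main (rho B) D b0).
pose Phi (Q : G * G * G * G) := (hh Q.1.1.1, hh Q.1.1.2, hh Q.1.2, hh Q.2).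
transitivity #|Phi @: [set Q | Acond B D Q]|.
  rewrite card_in_imset //.
  move=> [[[x1 x2] x3] x4] [[[y1 y2] y3] y4]; rewrite !inE /Acond /=.
  move=> /andP [hx1 /andP [hx2 /andP [hx3 /andP [hx4 _]]]].
  move=> /andP [hy1 /andP [hy2 /andP [hy3 /andP [hy4 _]]]].
  by case=> /hh_inj-> // /hh_inj-> // /hh_inj-> // /hh_inj-> //.
apply: eq_card => a; rewrite inE; apply/imsetP/idP.
  move=> [[[[x1 x2] x3] x4] hQ ->]; move: hQ; rewrite inE /Acond /=.
  move=> /andP [hx1 /andP [hx2 /andP [hx3 /andP [hx4 hc]]]].
  by rewrite -condE.
move: a => [[[a1 a2] a3] a4] ha.
have [X1 hX1 e1] := hh_surj a1; have [X2 hX2 e2] := hh_surj a2.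
have [X3 hX3 e3] := hh_surj a3; have [X4 hX4 e4] := hh_surj a4.
exists (X1, X2, X3, X4); last by rewrite /Phi /= e1 e2 e3 e4.
by rewrite inE /Acond /= hX1 hX2 hX3 hX4 /= condE // e1 e2 e3 e4.
Qed.

End FF.

Import Pdiv.CommonRing Pdiv.RingMonic.

Lemma red2_zmod : zmod_morphism red2.
Proof. by do 2![case=> [[|[|[|[|//]]]] ?]] ; apply/val_inj. Qed.
Lemma red2_monoid : monoid_morphism red2.
Proof.
split; first by apply/val_inj.
by do 2![case=> [[|[|[|[|//]]]] ?]] ; apply/val_inj.
Qed.
HB.instance Definition _ := GRing.isZmodMorphism.Build _ _ red2 red2_zmod.
HB.instance Definition _ := GRing.isMonoidMorphism.Build _ _ red2 red2_monoid.

Section Red.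
Variable f : {poly 'Z_4}.
Hypothesis fM : f \is monic.
Hypothesis fs : (1 < size f)%N.
Variable hI : monic_irreducible_poly (fbar f).

Lemma mkf : mk_monic f = f.
Proof. by rewrite /mk_monic fs fM. Qed.
Lemma mkfb : mk_monic (fbar f) = fbar f.
Proof. by rewrite /mk_monic; case: hI => -[hs _] hm; rewrite hs hm. Qed.

Definition redq (p : {poly %/ f}) : {poly %/ fbar f with hI} :=
  let _ := (fM, fs) in in_qpoly (fbar f) (map_poly red2 (p : {poly 'Z_4})).

Lemma in_qpoly_mulf (x y : {poly 'F_2}) :
  in_qpoly (fbar f) (x * fbar f + y) = in_qpoly (fbar f) y.
Proof.
rewrite in_qpolyD; apply/val_inj => /=.
by rewrite mkfb rmodp_mull ?add0r //; case: hI.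
Qed.

Lemma redq_zmod : zmod_morphism redq.
Proof. by move=> p q; rewrite /redq /= rmorphB raddfB. Qed.

Lemma red_mod (P : {poly 'Z_4}) :
  in_qpoly (fbar f) (map_poly red2 (rmodp P (mk_monic f)))
  = in_qpoly (fbar f) (map_poly red2 P).
Proof.
rewrite mkf {2}(rdivp_eq fM P) rmorphD rmorphM /=.
by rewrite -/(fbar f) in_qpoly_mulf.
Qed.

Lemma redq_monoid : monoid_morphism redq.
Proof.
split.
  by rewrite /redq /= rmorph1 in_qpoly1.
move=> p q; rewrite /redq poly_of_qpolyM red_mod rmorphM /=.
by rewrite in_qpolyM.
Qed.

HB.instance Definition _ := GRing.isZmodMorphism.Build _ _ redq redq_zmod.
HB.instance Definition _ := GRing.isMonoidMorphism.Build _ _ redq redq_monoid.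

End Red.

Definition half (c : 'Z_4) : 'Z_4 := ((c : nat) %/ 2)%:R.

Lemma Z4_half (c : 'Z_4) : red2 c = 0 -> c = half c *+ 2.
Proof. by case: c => [[|[|[|[|//]]]] ?] /= h; apply/val_inj; move: h => /(congr1 val). Qed.

Lemma Z4_two (c : 'Z_4) : c *+ 2 = 0 -> red2 c = 0.
Proof. by case: c => [[|[|[|[|//]]]] ?] /= h; apply/val_inj; move: h => /(congr1 val). Qed.

Section Conc.
Variable m : nat.
Variable f : {poly 'Z_4}.
Hypothesis fM : f \is monic.
Hypothesis sf : size f = m.+1.
Hypothesis m0 : (0 < m)%N.
Variable hI : monic_irreducible_poly (fbar f).

Lemma fs : (1 < size f)%N. Proof. by rewrite sf ltnS. Qed.

Local Notation S := {poly %/ f}.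
Local Notation K := {poly %/ fbar f with hI}.

Definition phiG (u : GR m) : S := in_qpoly f (rVpoly u).
Definition chi (u : Fq m) : K := in_qpoly (fbar f) (rVpoly u).

Lemma rmodp_mk (P : {poly 'Z_4}) : rmodp P (mk_monic f) = rmodp P f.
Proof. by rewrite (@mkf f fM fs). Qed.

Lemma size_fbar : size (fbar f) = m.+1.
Proof.
rewrite /fbar size_map_poly_id0 ?sf //.
by rewrite (monicP fM) rmorph1 oner_eq0.
Qed.

Lemma rmodp_mkb (P : {poly 'F_2}) : rmodp P (mk_monic (fbar f)) = rmodp P (fbar f).
Proof. by rewrite (@mkfb f hI). Qed.

Lemma phiG_val u : (phiG u : {poly 'Z_4}) = rVpoly u.
Proof. by rewrite /= rmodp_mk rmodp_small // sf ltnS size_poly. Qed.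

Lemma chi_val u : (chi u : {poly 'F_2}) = rVpoly u.
Proof. by rewrite /= rmodp_mkb rmodp_small // size_fbar ltnS size_poly. Qed.

Lemma phiG_inj : injective phiG.
Proof.
move=> u v e; have := phiG_val u; rewrite e phiG_val.
by move/(can_inj (@rVpolyK _ _)).
Qed.

Lemma chi_inj : injective chi.
Proof.
move=> u v e; have := chi_val u; rewrite e chi_val.
by move/(can_inj (@rVpolyK _ _)).
Qed.

Lemma phiG_add u v : phiG (u + v) = phiG u + phiG v.
Proof. by rewrite /phiG linearD in_qpolyD. Qed.

Lemma chi_add u v : chi (u + v) = chi u + chi v.
Proof. by rewrite /chi linearD in_qpolyD. Qed.

Lemma phiG0 : phiG 0 = 0.
Proof. by rewrite /phiG linear0 in_qpoly0. Qed.

Lemma chi0 : chi 0 = 0.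
Proof. by rewrite /chi linear0 in_qpoly0. Qed.

Lemma phiG_mul u v : phiG (GRmul f u v) = phiG u * phiG v.
Proof.
apply: val_inj; change (polyn (phiG (GRmul f u v)) = polyn (phiG u * phiG v)).
rewrite poly_of_qpolyM !phiG_val /GRmul poly_rV_K; last first.
  rewrite -ltnS -sf; apply: ltn_rmodpN0.
  by rewrite -size_poly_gt0 sf.
by rewrite rmodp_mk.
Qed.

Lemma chi_mul u v : chi (Fqmul f u v) = chi u * chi v.
Proof.
apply: val_inj; change (polyn (chi (Fqmul f u v)) = polyn (chi u * chi v)).
rewrite poly_of_qpolyM !chi_val /Fqmul.
have fb : fbar f \is monic by case: hI.
rewrite (Pdiv.IdomainMonic.modpE fb) poly_rV_K; last first.
  rewrite -ltnS -size_fbar; apply: ltn_rmodpN0.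
  by rewrite -size_poly_gt0 size_fbar.
by rewrite rmodp_mkb.
Qed.


Lemma phiG_one : phiG (GRone m f) = 1.
Proof.
apply: val_inj; change (polyn (phiG (GRone m f)) = polyn (1 : S)).
rewrite phiG_val /GRone rmodp_small ?poly_rV_K ?size_polyC ?oner_eq0 ?sf //.
Qed.

Lemma phiG_exp u k : phiG (GRexp f u k) = phiG u ^+ k.
Proof.
elim: k => [|k IH]; first by rewrite expr0 -phiG_one.
by rewrite exprS -IH /GRexp iterS -/(GRexp f u k) phiG_mul.
Qed.

Lemma chi_cube y : chi (Fqcube f y) = chi y ^+ 3.
Proof. by rewrite /Fqcube !chi_mul !exprS expr0 mulr1. Qed.

Definition rq := @redq f fM fs hI.

Lemma chi_red X : chi (redR X) = rq (phiG X).
Proof.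
rewrite /rq /redq; congr in_qpoly.
by rewrite phiG_val map_rVpoly.
Qed.

Lemma h2K : (2%:R : K) = 0.
Proof.
apply: val_inj; change (polyn (2%:R : K) = polyn (0 : K)).
rewrite qpolyC_natr -polyC_natr.
have -> : (2%:R : 'F_2) = 0 by apply/val_inj.
by rewrite polyC0.
Qed.

Lemma cardK : #|K| = (2 ^ m)%N.
Proof. by rewrite card_qfpoly size_fbar card_Fp. Qed.

Lemma h4S : (4%:R : S) = 0.
Proof.
apply: val_inj; change (polyn (4%:R : S) = polyn (0 : S)).
rewrite qpolyC_natr -polyC_natr.
have -> : (4%:R : 'Z_4) = 0 by apply/val_inj.
by rewrite polyC0.
Qed.


Lemma size_S (u : S) : (size (u : {poly 'Z_4}) < m.+1)%N.
Proof.
apply: (leq_trans (size_mk_monic u)).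
by rewrite (@mkf f fM fs) sf.
Qed.

Lemma size_map_leq (R1 R2 : nzRingType) (g : R1 -> R2) (P : {poly R1}) :
  (size (map_poly g P) <= size P)%N.
Proof. by rewrite /map_poly size_poly. Qed.
Arguments size_map_leq {R1 R2} g P.

Lemma rq_map0 (u : S) : (rq u == 0) = (map_poly red2 (u : {poly 'Z_4}) == 0).
Proof.
apply/eqP/eqP => [hu | hm].
  have := congr1 (fun x : K => (x : {poly 'F_2})) hu.
  rewrite /= rmodp_mkb rmodp_small //.
  by rewrite size_fbar (leq_ltn_trans (size_map_leq _ _)) // size_S.
by rewrite /rq /redq /= hm in_qpoly0.
Qed.

Lemma hker (u : S) : rq u = 0 -> exists k : S, u = 2%:R * k.
Proof.
move/eqP; rewrite rq_map0 => /eqP hm.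
set P := (u : {poly 'Z_4}) in hm.
exists (in_qpoly f (map_poly half P)).
apply: val_inj; change (polyn u = polyn (2%:R * in_qpoly f (map_poly half P))).
rewrite poly_of_qpolyM qpolyC_natr /= !rmodp_mk.
rewrite (@rmodp_small _ (map_poly half P)); last first.
  by rewrite sf (leq_ltn_trans (size_map_leq _ _)) // size_S.
have -> : 2%:R * map_poly half P = P.
  apply/polyP => i; rewrite mulr_natl coefMn coef_map_id0 //.
  apply/esym/Z4_half.
  by have := congr1 (fun p : {poly 'F_2} => p`_i) hm; rewrite /= coef_map coef0.
by rewrite rmodp_small // sf size_S.
Qed.

Lemma hker2 (u : S) : 2%:R * u = 0 -> rq u = 0.
Proof.
move=> hu; apply/eqP; rewrite rq_map0; apply/eqP.
have : polyn (2%:R * u) = polyn (0 : S) by rewrite hu.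
rewrite poly_of_qpolyM qpolyC_natr rmodp_mk rmodp_small; last first.
  rewrite sf (leq_ltn_trans _ (size_S u)) //.
  by rewrite -polyC_natr mul_polyC size_scale_leq.
move=> h0; apply/polyP => i; rewrite coef_map coef0 /=; apply: Z4_two.
have := congr1 (fun p : {poly 'Z_4} => p`_i) h0.
by rewrite /= mulr_natl coefMn coef0.
Qed.


Variable beta : GR m.
Hypothesis hb : has_order_q1 f beta.

Lemma q1pos : (0 < (2 ^ m).-1)%N.
Proof. by rewrite -subn1 subn_gt0 -[1%N]/(2 ^ 0)%N ltn_exp2l. Qed.

Lemma bq : phiG beta ^+ (2 ^ m).-1 = 1.
Proof. by rewrite -phiG_exp hb.1 phiG_one. Qed.

Lemma hTsq X : X \in Teich f beta -> exists u, phiG X = u ^+ 2.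
Proof.
rewrite /Teich in_setU1 => /orP [/eqP -> | /imsetP [i _ ->]].
  by exists 0; rewrite phiG0 expr0n.
exists (phiG beta ^+ (i * 2 ^ m.-1)).
rewrite phiG_exp; move: (nat_of_ord i) => k.
rewrite -exprM -mulnA -expnSr prednK //.
have E : (k * 2 ^ m)%N = (k + k * (2 ^ m).-1)%N.
  by rewrite -mulnS prednK // expn_gt0.
by rewrite E exprD mulnC exprM bq expr1n mulr1.
Qed.

Lemma exp_cancel (i k : nat) : phiG beta ^+ (i + k) = phiG beta ^+ i ->
  phiG beta ^+ k = 1.
Proof.
move=> e.
set c := phiG beta ^+ (2 ^ m).-1.-1.
have cb : c * phiG beta = 1.
  by rewrite /c -exprSr prednK ?q1pos // bq.
have -> : phiG beta ^+ k = (c * phiG beta) ^+ i * phiG beta ^+ k by rewrite cb expr1n mul1r.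
by rewrite exprMn -mulrA -exprD e -exprMn cb expr1n.
Qed.

Lemma card_Teich : #|Teich f beta| = (2 ^ m)%N.
Proof.
rewrite /Teich cardsU1 card_imset ?card_ord.
  have -> : (0 \notin [set GRexp f beta (nat_of_ord i) | i : 'I_(2 ^ m).-1]) = true.
    apply/negP => /imsetP [i _ e].
    have : phiG beta ^+ (i + ((2 ^ m).-1 - i)) = 0.
      by rewrite exprD -phiG_exp -e phiG0 mul0r.
    rewrite subnKC ?bq; last exact: ltnW (ltn_ord i).
    by move/eqP; rewrite oner_eq0.
  by rewrite add1n prednK // expn_gt0.
move=> i j e.
wlog le_ij : i j e / (i <= j)%N.
  by move=> H; case: (leqP i j) => [/H -> // | /ltnW /(H j i (esym e)) ->].
apply/val_inj => /=.
have ek : phiG beta ^+ (i + (j - i)) = phiG beta ^+ i.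
  by rewrite subnKC // -!phiG_exp e.
have := exp_cancel _ _ ek.
case: (posnP (j - i)) => [/eqP | k0 hk].
  by rewrite subn_eq0 => ji _; apply/eqP; rewrite eqn_leq le_ij ji.
have : GRexp f beta (j - i)%N = GRone m f.
  by apply: phiG_inj; rewrite phiG_exp phiG_one.
move/eqP; rewrite (negbTE (hb.2 (j - i)%N _)) //.
by rewrite k0 /= (leq_ltn_trans (leq_subr _ _)).
Qed.


Local Notation G := (GR m).

Lemma rhoB0 B : B \in Teich f beta -> B != 0 -> rq (phiG B) != 0.
Proof.
move=> hB B0; apply/negP => /eqP e.
have h0 : (0 : G) \in Teich f beta by rewrite /Teich in_setU1 eqxx.
have := @rho_inj K h2K m cardK m0 G S rq h4S hker phiG phiG_inj
   (Teich f beta) hTsq B 0 hB h0.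
have rq0 : rq 0 = 0 by rewrite /rq /redq /= map_poly0 in_qpoly0.
rewrite /rho /= -/rq e phiG0 rq0.
by move=> /(_ erefl) /eqP; rewrite (negbTE B0).
Qed.


Lemma card_Fq : #|Fq m| = (2 ^ m)%N.
Proof. by rewrite card_mx card_Fp // mul1n. Qed.

Lemma chi_surj (y : K) : exists x, chi x = y.
Proof.
have : chi @: [set: Fq m] = [set: K].
  apply/eqP; rewrite eqEcard subsetT cardsT card_imset; last exact: chi_inj.
  by rewrite cardsT card_Fq cardK leqnn.
move/setP/(_ y); rewrite inE => /imsetP [x _ ->].
by exists x.
Qed.

Lemma card_Rt d : #|Rt K (chi d)| = #|[set y : Fq m | Fqcube f y + y + d == 0]|.
Proof.
rewrite -(card_imset _ chi_inj); apply: eq_card => t; rewrite inE /rt.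
have [y <-] := chi_surj t.
rewrite (mem_imset _ _ chi_inj) inE.
by rewrite -chi_cube -!chi_add -chi0 (inj_eq chi_inj).
Qed.

Lemma final_main B d : B \in Teich f beta -> B != 0 ->
  let N := #|[set Q : GR m * GR m * GR m * GR m |
               [&& Q.1.1.1 \in Teich f beta, Q.1.1.2 \in Teich f beta,
                   Q.1.2 \in Teich f beta, Q.2 \in Teich f beta,
                   Q.1.1.1 + Q.1.1.2 + Q.1.2 + Q.2 == B *+ 2 &
                   Fqcube f (redR Q.1.1.1) + Fqcube f (redR Q.1.1.2)
                   + Fqcube f (redR Q.1.2) + Fqcube f (redR Q.2)
                   == Fqmul f (Fqcube f (redR B)) d]]| in
  (d = 0 -> N = (3 * 2 ^ m)%N) /\
  (d \in Mset m f 0 :|: Mset m f 1 -> N = 0%N) /\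
  (d \in Mset m f 3 -> N = (6 * 2 ^ m)%N).
Proof.
move=> hB B0 N.
have EN : N = #|[set Q | Acond K G S rq phiG (Teich f beta) B (chi d) Q]|.
  rewrite /N; apply: eq_card => Q; rewrite [in LHS]in_set [in RHS]in_set /Acond.
  congr (_ && (_ && (_ && (_ && (_ && _))))).
    rewrite -(inj_eq phiG_inj) (phiG_add (Q.1.1.1 + Q.1.1.2 + Q.1.2) Q.2).
    rewrite (phiG_add (Q.1.1.1 + Q.1.1.2) Q.1.2) (phiG_add Q.1.1.1 Q.1.1.2).
    change (B *+ 2) with (B + B); rewrite (phiG_add B B).
    by rewrite mulr_natl mulr2n.
  by rewrite -(inj_eq chi_inj) !chi_add chi_mul !chi_cube !chi_red.
have hTc : #|Teich f beta| = #|K| by rewrite card_Teich cardK.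
rewrite EN (@countA K h2K m cardK m0 G S rq h4S hker hker2 phiG phiG_inj
   (Teich f beta) hTsq hTc B (chi d) hB (rhoB0 B hB B0)).
rewrite sum_Rt cardK.
split; [|split].
- by move=> ->; rewrite chi0 (@sum_d0 K h2K) mulnC.
- have D0 : d != 0 -> chi d != 0.
    by move=> d0; apply: contra d0 => /eqP; rewrite -chi0 => /chi_inj ->.
  rewrite in_setU /Mset !inE => /orP [] /andP [d0 /eqP c];
    by rewrite (@sum_d1 K h2K m cardK m0) ?muln0 ?D0 // card_Rt c.
- rewrite /Mset inE => /andP [d0 /eqP c].
  have D0 : chi d != 0.
    by apply: contra d0 => /eqP; rewrite -chi0 => /chi_inj ->.
  by rewrite (@sum_d3 K h2K m cardK m0 _ D0) ?card_Rt ?c // mulnC.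
Qed.

End Conc.

Theorem corollaryB10 (m : nat) (f : {poly 'Z_4}) (beta B : GR m) (d : Fq m) :
  odd m ->
  f \is monic -> size f = m.+1 -> irreducible_poly (fbar f) ->
  has_order_q1 f beta ->
  B \in Teich f beta -> B != 0 ->
  let N := #|[set Q : GR m * GR m * GR m * GR m |
               [&& Q.1.1.1 \in Teich f beta, Q.1.1.2 \in Teich f beta,
                   Q.1.2 \in Teich f beta, Q.2 \in Teich f beta,
                   Q.1.1.1 + Q.1.1.2 + Q.1.2 + Q.2 == B *+ 2 &
                   Fqcube f (redR Q.1.1.1) + Fqcube f (redR Q.1.1.2)
                   + Fqcube f (redR Q.1.2) + Fqcube f (redR Q.2)
                   == Fqmul f (Fqcube f (redR B)) d]]| in
  (d = 0 -> N = (3 * 2 ^ m)%N) /\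
  (d \in Mset m f 0 :|: Mset m f 1 -> N = 0%N) /\
  (d \in Mset m f 3 -> N = (6 * 2 ^ m)%N).
Proof.
move=> hm fM sf hirr hb hB B0.
have m0 : (0 < m)%N by case: m {beta B d hB B0 hb sf} hm.
have hI : monic_irreducible_poly (fbar f).
  by split => //; rewrite /fbar; apply: monic_map.
exact: (@final_main m f fM sf m0 hI beta hb B d hB B0).
Qed.
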